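(* The map $f\colon D_{uz}\to\mathbb{R}^2$ is injective; hence $f$ is a bijection from $D_{uz}$ onto $D_{ab}=f(D_{uz})$.
   Context: Let $D_{uz}=\{(u,z)\in\mathbb{R}^2: 0<u<1,\ 0<z<1\}$. Define $f\colon D_{uz}\to\mathbb{R}^2$ by $f(u,z)=(a(u,z),b(u,z))$, where $a(u,z)$ and $b(u,z)$ are the positive real numbers determined by $$a^2=\frac{u^2+z^2}{u^2z^2+1},\qquad b^2=\frac{(1+u^2)(1+z^2)-2z(1-u^2)}{(1+u^2)(1+z^2)+2z(1-u^2)}$$ (both right-hand sides are positive on $D_{uz}$). Let $D_{ab}=f(D_{uz})$. *)

(* Defs.v *)
From Stdlib Require Import Reals.
Open Scope R_scope.

Definition D_uz (p : R * R) : Prop :=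
  0 < fst p < 1 /\ 0 < snd p < 1.

Definition a_sq (u z : R) : R := (u^2 + z^2) / (u^2 * z^2 + 1).
Definition b_sq (u z : R) : R :=
  ((1 + u^2) * (1 + z^2) - 2 * z * (1 - u^2)) /
  ((1 + u^2) * (1 + z^2) + 2 * z * (1 - u^2)).

Definition f_ab (p : R * R) : R * R :=
  (sqrt (a_sq (fst p) (snd p)), sqrt (b_sq (fst p) (snd p))).

Definition D_ab (q : R * R) : Prop := exists p, D_uz p /\ f_ab p = q.

(* Main.v *)
Require Import Defs.
From Stdlib Require Import Reals Lra Psatz.
Open Scope R_scope.

Definition cc (u : R) := (1 - u^2) / (1 + u^2).
Definition ss (z : R) := 2 * z / (1 + z^2).

Lemma a_sq_eq u z : 0 < u < 1 -> 0 < z < 1 ->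
  a_sq u z = (1 - cc u * cc z) / (1 + cc u * cc z).
Proof.
  intros Hu Hz. unfold a_sq, cc. field.
  split; [| split]; nra.
Qed.

Lemma b_sq_eq u z : 0 < u < 1 -> 0 < z < 1 ->
  b_sq u z = (1 - cc u * ss z) / (1 + cc u * ss z).
Proof.
  intros Hu Hz. unfold b_sq, cc, ss. field.
  split; [| split]; nra.
Qed.

Lemma cc_bounds u : 0 < u < 1 -> 0 < cc u < 1.
Proof. intros Hu. unfold cc. split.
  apply Rdiv_lt_0_compat; nra.
  apply Rmult_lt_reg_r with (1+u^2); [nra|]. field_simplify; nra.
Qed.

Lemma ss_bounds z : 0 < z < 1 -> 0 < ss z <= 1.
Proof. intros Hz. unfold ss. split.
  apply Rdiv_lt_0_compat; nra.
  apply Rmult_le_reg_r with (1+z^2); [nra|]. field_simplify; nra.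
Qed.

Lemma pyth z : 0 < z < 1 -> cc z ^ 2 + ss z ^ 2 = 1.
Proof. intros Hz. unfold cc, ss. field. nra. Qed.

Lemma g_inj x y : -1 < x < 1 -> -1 < y < 1 ->
  (1 - x) / (1 + x) = (1 - y) / (1 + y) -> x = y.
Proof.
  intros Hx Hy H.
  assert (H2 : (1 - x) * (1 + y) = (1 - y) * (1 + x)).
  { apply (f_equal (fun t => t * (1+x) * (1+y))) in H.
    field_simplify in H; try lra. }
  nra.
Qed.

Lemma cc_inj u v : 0 < u < 1 -> 0 < v < 1 -> cc u = cc v -> u = v.
Proof.
  intros Hu Hv H. unfold cc in H.
  assert (H2 : (1 - u^2) * (1 + v^2) = (1 - v^2) * (1 + u^2)).
  { apply (f_equal (fun t => t * (1+u^2) * (1+v^2))) in H.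
    field_simplify in H; nra. }
  nra.
Qed.

Lemma inj : forall p1 p2 : R * R, D_uz p1 -> D_uz p2 -> f_ab p1 = f_ab p2 -> p1 = p2.
Proof.
  intros [u1 z1] [u2 z2] [Hu1 Hz1] [Hu2 Hz2] H. simpl in *.
  unfold f_ab in H; simpl in H. injection H as Ha Hb.
  rewrite !a_sq_eq, !b_sq_eq in * by assumption.
  pose proof (cc_bounds _ Hu1). pose proof (cc_bounds _ Hu2).
  pose proof (cc_bounds _ Hz1). pose proof (cc_bounds _ Hz2).
  pose proof (ss_bounds _ Hz1). pose proof (ss_bounds _ Hz2).
  pose proof (pyth _ Hz1). pose proof (pyth _ Hz2).
  apply sqrt_inj in Ha; try (apply Rlt_le, Rdiv_lt_0_compat; nra).
  apply sqrt_inj in Hb; try (apply Rlt_le, Rdiv_lt_0_compat; nra).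
  apply g_inj in Ha; try nra.
  apply g_inj in Hb; try nra.
  assert (Hc2 : cc u1 ^ 2 = cc u2 ^ 2).
  { replace (cc u1 ^ 2) with ((cc u1 * cc z1)^2 + (cc u1 * ss z1)^2)
      by (transitivity (cc u1 ^2 * (cc z1 ^ 2 + ss z1 ^ 2)); [ring | rewrite H5; ring]).
    rewrite Ha, Hb.
    transitivity (cc u2 ^2 * (cc z2 ^ 2 + ss z2 ^ 2)); [ring | rewrite H6; ring]. }
  assert (Hc : cc u1 = cc u2) by nra.
  assert (Hk : cc z1 = cc z2).
  { rewrite Hc in Ha. apply Rmult_eq_reg_l with (cc u2); lra. }
  f_equal; apply cc_inj; auto.
Qed.

Theorem mainTheorem3 :
  (forall p1 p2 : R * R, D_uz p1 -> D_uz p2 -> f_ab p1 = f_ab p2 -> p1 = p2) /\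
  (forall q : R * R, D_ab q ->
     exists p : R * R, D_uz p /\ f_ab p = q /\
       (forall p' : R * R, D_uz p' -> f_ab p' = q -> p' = p)).
Proof.
  split; [exact inj|].
  intros q [p [Hp Hq]]. exists p. split; [exact Hp|]. split; [exact Hq|].
  intros p' Hp' Hq'. apply inj; auto. congruence.
Qed.
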